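(* Let $\mathcal{D}$ be an algebra and vector lattice of bounded real functions with the Stone property, and $(\mathcal{E},\mathcal{D})$ a bilinear form on which the unit contraction operates, with killing functional $K$. Then $K(f^2)\le\mathcal{E}(f)$ for all $f\in\mathcal{D}_0$, and $\mathcal{Q}(f,g):=\mathcal{E}(f,g)-K(fg)$, $f,g\in\mathcal{D}_0$, defines a bilinear form $(\mathcal{Q},\mathcal{D}_0)$ on which the unit contraction operates and which has zero killing.
   Context: Stone property: $f\wedge1\in\mathcal{D}$ for $f\in\mathcal{D}$. Unit contraction $T_1(x)=\max(x,0)\wedge1$; operates on $(\mathcal{E},\mathcal{D})$ if $\mathcal{E}(T_1(f))\le\mathcal{E}(f)$. Bilinear form: symmetric nonnegative definite bilinear map, $\mathcal{E}(f)=\mathcal{E}(f,f)$. For $f\ge0$ in $\mathcal{D}$, $E_f:=\{\varphi\in\mathcal{D}:\mathbf 1_{\{f>0\}}\le\varphi\le\mathbf 1\}$; $\mathcal{D}_0^+:=\{f\in\mathcal{D},f\ge0: E_f\ne\emptyset\}$, $\mathcal{D}_0$ its linear span (an ideal of $\mathcal{D}$, so $fg\in\mathcal{D}_0$ for $f,g\in\mathcal{D}_0$). Killing functional: $K(f):=\inf\{\mathcal{E}(f,\varphi):\varphi\in E_f\}$ for $f\in\mathcal{D}_0^+$, extended to $\mathcal{D}_0$ by $K(f)=K(f^+)-K(f^-)$. A form $(\mathcal{Q},\mathcal{D}_0)$ has zero killing if its killing functional (defined by the same recipe with $\mathcal{Q},\mathcal{D}_0$ in place of $\mathcal{E},\mathcal{D}$)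 vanishes identically. *)

(* Defs.v *)
From Stdlib Require Import Reals ClassicalEpsilon.
Open Scope R_scope.

Section Defs.
Context {X : Type}.
Notation fn := (X -> R).

Definition fadd (f g : fn) : fn := fun x => f x + g x.
Definition fscal (a : R) (f : fn) : fn := fun x => a * f x.
Definition fmul (f g : fn) : fn := fun x => f x * g x.
Definition fmax (f g : fn) : fn := fun x => Rmax (f x) (g x).
Definition fmin (f g : fn) : fn := fun x => Rmin (f x) (g x).
Definition fzero : fn := fun _ => 0.
Definition fone : fn := fun _ => 1.
Definition fpos (f : fn) : fn := fun x => Rmax (f x) 0.
Definition fneg (f : fn) : fn := fun x => Rmax (- f x) 0.
Definition T1 (t : R) : R := Rmin (Rmax t 0) 1.
Definition fT1 (f : fn) : fn := fun x => T1 (f x).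

Definition bounded (f : fn) : Prop := exists M, forall x, Rabs (f x) <= M.

Definition subspace (D : fn -> Prop) : Prop :=
  D fzero /\ (forall f g, D f -> D g -> D (fadd f g)) /\
  (forall a f, D f -> D (fscal a f)).

Definition stone_algebra_lattice (D : fn -> Prop) : Prop :=
  subspace D /\ (forall f, D f -> bounded f) /\
  (forall f g, D f -> D g -> D (fmul f g)) /\
  (forall f g, D f -> D g -> D (fmax f g)) /\
  (forall f g, D f -> D g -> D (fmin f g)) /\
  (forall f, D f -> D (fmin f fone)).

Definition bilinear_form (D : fn -> Prop) (E : fn -> fn -> R) : Prop :=
  subspace D /\
  (forall f g, D f -> D g -> E f g = E g f) /\
  (forall a b f g h, D f -> D g -> D h ->
       E (fadd (fscal a f) (fscal b g)) h = a * E f h + b * E g h) /\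
  (forall f, D f -> 0 <= E f f).

Definition unit_contraction_operates (D : fn -> Prop) (E : fn -> fn -> R) : Prop :=
  forall f, D f -> D (fT1 f) /\ E (fT1 f) (fT1 f) <= E f f.

Definition Eset (D : fn -> Prop) (f phi : fn) : Prop :=
  D phi /\ (forall x, 0 < f x -> 1 <= phi x) /\ (forall x, phi x <= 1) /\
  (forall x, 0 <= phi x).

Definition D0plus (D : fn -> Prop) (f : fn) : Prop :=
  D f /\ (forall x, 0 <= f x) /\ exists phi, Eset D f phi.

Inductive span (S : fn -> Prop) : fn -> Prop :=
| span_zero : span S fzero
| span_gen : forall f, S f -> span S f
| span_add : forall f g, span S f -> span S g -> span S (fadd f g)
| span_scal : forall a f, span S f -> span S (fscal a f).

Definition D0 (D : fn -> Prop) : fn -> Prop := span (D0plus D).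

Definition is_glb (P : R -> Prop) (l : R) : Prop :=
  (forall r, P r -> l <= r) /\ (forall b, (forall r, P r -> b <= r) -> b <= l).
Definition Rinf (P : R -> Prop) : R := epsilon (inhabits 0) (is_glb P).

Definition killing_plus (D : fn -> Prop) (E : fn -> fn -> R) (f : fn) : R :=
  Rinf (fun r => exists phi, Eset D f phi /\ r = E f phi).

Definition killing (D : fn -> Prop) (E : fn -> fn -> R) (f : fn) : R :=
  killing_plus D E (fpos f) - killing_plus D E (fneg f).

Definition zero_killing (D : fn -> Prop) (E : fn -> fn -> R) : Prop :=
  forall f, D0 D f -> killing D E f = 0.

End Defs.

(* Main.v *)
Require Import Defs.
From Stdlib Require Import Reals Lra ClassicalEpsilon FunctionalExtensionality Classical.
Open Scope R_scope.

Ltac rdes := unfold T1, Rmax, Rmin in *; repeat match goal with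
 | |- context[Rle_dec ?a ?b] => destruct (Rle_dec a b)
 | H: context[Rle_dec ?a ?b] |- _ => destruct (Rle_dec a b)
 end.

Lemma lim_pos (a b : R) : (forall t, 0 < t -> 0 <= a + t * b) -> 0 <= a.
Proof.
  intros H. destruct (Rle_lt_dec 0 a) as [h|h]; auto.
  set (t := - a / (Rabs b + 1)).
  assert (Ht : 0 < t) by (unfold t; apply Rdiv_lt_0_compat; [lra| pose proof (Rabs_pos b); lra]).
  specialize (H t Ht).
  assert (t * b <= t * Rabs b) by (apply Rmult_le_compat_l; [lra| apply RRle_abs]).
  assert (t * Rabs b < - a).
  { unfold t. unfold Rdiv. rewrite Rmult_assoc.
    assert (Hr : / (Rabs b + 1) * Rabs b < 1).
    { pose proof (Rabs_pos b). apply (Rmult_lt_reg_l (Rabs b + 1)); [lra|].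
      rewrite <- Rmult_assoc, Rinv_r by lra. lra. }
    assert (0 < -a) by lra. nra. }
  lra.
Qed.

Lemma le_eps (b c : R) : (forall e, 0 < e -> b <= c + e) -> b <= c.
Proof.
  intros H. destruct (Rle_lt_dec b c) as [h|h]; auto.
  specialize (H ((b - c)/2)). lra.
Qed.

Definition Rglb := @is_glb.

Lemma glb_unique (P : R -> Prop) l1 l2 : is_glb P l1 -> is_glb P l2 -> l1 = l2.
Proof. intros [A B] [C D]. apply Rle_antisym; [apply D|apply B]; auto. Qed.

Lemma glb_exists (P : R -> Prop) : (exists r, P r) -> (exists b, forall r, P r -> b <= r) ->
  exists l, is_glb P l.
Proof.
  intros [r Hr] [b Hb].
  destruct (completeness (fun y => P (- y))) as [m [Hm1 Hm2]].
  - exists (- b). intros y Hy. specialize (Hb _ Hy). lra.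
  - exists (- r). rewrite Ropp_involutive. auto.
  - exists (- m). split.
    + intros s Hs. assert (- s <= m) by (apply Hm1; rewrite Ropp_involutive; auto). lra.
    + intros c Hc. assert (m <= - c).
      { apply Hm2. intros y Hy. specialize (Hc _ Hy). lra. } lra.
Qed.

Lemma Rinf_glb (P : R -> Prop) l : is_glb P l -> Rinf P = l.
Proof.
  intros H. unfold Rinf. apply (glb_unique P); auto.
  apply epsilon_spec. eauto.
Qed.

Lemma Rinf_spec (P : R -> Prop) : (exists r, P r) -> (exists b, forall r, P r -> b <= r) ->
  is_glb P (Rinf P).
Proof.
  intros H1 H2. destruct (glb_exists P H1 H2) as [l Hl]. rewrite (Rinf_glb P l Hl). auto.
Qed.

Lemma glb_approx (P : R -> Prop) l : is_glb P l -> forall e, 0 < e -> exists r, P r /\ r <= l + e.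
Proof.
  intros [A B] e He. apply NNPP. intros Hn.
  assert (l + e <= l); [|lra].
  apply B. intros r Hr. destruct (Rle_lt_dec r (l+e)); auto.
  exfalso. apply Hn. eauto. lra.
Qed.
Section Main.
Context {X : Type} (D : (X -> R) -> Prop) (E : (X -> R) -> (X -> R) -> R).
Hypothesis hD : stone_algebra_lattice D.
Hypothesis hE : bilinear_form D E.
Hypothesis hT : unit_contraction_operates D E.

Ltac dD := destruct hD as [[? [? ?]] [? [? [? [? ?]]]]].
Lemma D_zero : D fzero. Proof. dD; auto. Qed.
Lemma D_add f g : D f -> D g -> D (fadd f g). Proof. dD; auto. Qed.
Lemma D_scal a f : D f -> D (fscal a f). Proof. dD; auto. Qed.
Lemma D_mul f g : D f -> D g -> D (fmul f g). Proof. dD; auto. Qed.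
Lemma D_max f g : D f -> D g -> D (fmax f g). Proof. dD; auto. Qed.
Lemma D_min f g : D f -> D g -> D (fmin f g). Proof. dD; auto. Qed.
Lemma D_min1 f : D f -> D (fmin f fone). Proof. dD; auto. Qed.
Lemma D_bnd f : D f -> exists M, forall x, Rabs (f x) <= M. Proof. intros Hf; destruct hD as [_ [Hb _]]; apply (Hb f Hf). Qed.

Lemma D_ext f g : D f -> f = g -> D g. Proof. intros; subst; auto. Qed.

Lemma D_sub f g : D f -> D g -> D (fun x => f x - g x).
Proof.
  intros. apply (D_ext (fadd f (fscal (-1) g))). apply D_add; auto; apply D_scal; auto.
  extensionality x. unfold fadd, fscal. ring.
Qed.
Lemma D_lin a f b g : D f -> D g -> D (fun x => a * f x + b * g x).
Proof. intros. apply (D_add (fscal a f) (fscal b g)); apply D_scal; auto. Qed.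
Lemma D_pos f : D f -> D (fpos f).
Proof. intros. apply (D_max f fzero); auto using D_zero. Qed.
Lemma D_neg f : D f -> D (fneg f).
Proof. intros. apply (D_ext (fmax (fscal (-1) f) fzero)). apply D_max; auto using D_scal, D_zero.
  extensionality x. unfold fmax, fscal, fzero, fneg. f_equal; ring. Qed.
Lemma D_minc f c : D f -> 0 < c -> D (fun x => Rmin (f x) c).
Proof.
  intros. apply (D_ext (fscal c (fmin (fscal (/c) f) fone))).
  apply D_scal, D_min1, D_scal; auto.
  extensionality x. unfold fscal, fmin, fone.
  assert (0 < /c) by (apply Rinv_0_lt_compat; auto).
  rdes; try field_simplify; try lra.
  - exfalso. apply n. apply (Rmult_le_reg_l (/c)); auto. rewrite Rinv_l by lra. lra.
  - exfalso. apply n. apply (Rmult_le_reg_l c); auto. rewrite <- Rmult_assoc, Rinv_r by lra. lra.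
Qed.
Lemma D_T1 f : D f -> D (fT1 f). Proof. intros; apply hT; auto. Qed.
Lemma E_T1 f : D f -> E (fT1 f) (fT1 f) <= E f f. Proof. intros; apply hT; auto. Qed.

Lemma E_sym f g : D f -> D g -> E f g = E g f. Proof. destruct hE as [_ [h _]]; auto. Qed.
Lemma E_nn f : D f -> 0 <= E f f. Proof. destruct hE as [_ [_ [_ h]]]; auto. Qed.
Lemma E_lin a f b g h : D f -> D g -> D h ->
  E (fun x => a * f x + b * g x) h = a * E f h + b * E g h.
Proof. intros. apply (proj1 (proj2 (proj2 hE))); auto. Qed.
Lemma E_add f g h : D f -> D g -> D h -> E (fadd f g) h = E f h + E g h.
Proof. intros. replace (fadd f g) with (fun x => 1 * f x + 1 * g x).
  rewrite E_lin; auto; ring. extensionality x; unfold fadd; ring. Qed.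
Lemma E_scal a f h : D f -> D h -> E (fscal a f) h = a * E f h.
Proof. intros. replace (fscal a f) with (fun x => a * f x + 0 * f x).
  rewrite E_lin; auto; ring. extensionality x; unfold fscal; ring. Qed.
Lemma E_lin_r a f b g h : D f -> D g -> D h ->
  E h (fun x => a * f x + b * g x) = a * E h f + b * E h g.
Proof. intros. rewrite E_sym, E_lin, (E_sym h f), (E_sym h g); auto. apply D_lin; auto. Qed.
Lemma E_add_r f g h : D f -> D g -> D h -> E h (fadd f g) = E h f + E h g.
Proof. intros. rewrite E_sym, E_add, (E_sym h f), (E_sym h g); auto. apply D_add; auto. Qed.
Lemma E_scal_r a f h : D f -> D h -> E h (fscal a f) = a * E h f.
Proof. intros. rewrite E_sym, E_scal, (E_sym h f); auto. apply D_scal; auto. Qed.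
Lemma E_zero h : D h -> E fzero h = 0.
Proof. intros. replace (@fzero X) with (fscal 0 (@fzero X)). rewrite E_scal; auto using D_zero; ring.
  extensionality x; unfold fscal, fzero; ring. Qed.
Lemma E_zero_r h : D h -> E h fzero = 0.
Proof. intros. rewrite E_sym; auto using D_zero. apply E_zero; auto. Qed.

Lemma E_quad f g a b : D f -> D g ->
  E (fun x => a * f x + b * g x) (fun x => a * f x + b * g x)
  = a * a * E f f + 2 * a * b * E f g + b * b * E g g.
Proof.
  intros. rewrite E_lin_r, !E_lin, (E_sym g f); auto; try apply D_lin; auto. ring.
Qed.


Lemma Eset_one f phi x : Eset D f phi -> 0 < f x -> phi x = 1.
Proof. intros [_ [A [B _]]] H. specialize (A x H). specialize (B x). lra. Qed.

Lemma E_pos f phi : D f -> (forall x, 0 <= f x) -> Eset D f phi -> 0 <= E f phi.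
Proof.
  intros Hf Hp He. pose proof He as [Hphi [_ [H1 H0]]].
  assert (key : forall t, 0 < t -> 0 <= 2 * E f phi + t * E f f).
  { intros t Ht.
    assert (Heq : fT1 (fun x => 1 * phi x + t * f x) = phi).
    { extensionality x. unfold fT1.
      destruct (Rlt_dec 0 (f x)) as [p|p].
      - rewrite (Eset_one f phi x He p). assert (0 < t * f x) by (apply Rmult_lt_0_compat; auto).
        rdes; lra.
      - assert (f x = 0) by (specialize (Hp x); lra). rewrite H. specialize (H1 x); specialize (H0 x).
        rdes; lra. }
    pose proof (E_T1 (fun x => 1 * phi x + t * f x) (D_lin 1 phi t f Hphi Hf)) as HT.
    rewrite Heq in HT. rewrite (E_quad) in HT; auto.
    rewrite (E_sym phi f) in HT; auto.
    assert (0 <= t * (2 * E f phi + t * E f f)) by nra. nra. }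
  pose proof (lim_pos _ _ key). lra.
Qed.

Lemma E_disj u h : D u -> D h -> (forall x, 0 <= u x) -> (forall x, 0 <= h x) ->
  (forall x, u x = 0 \/ h x = 0) -> E u h <= 0.
Proof.
  intros Du Dh Hu Hh Hd. destruct (D_bnd u Du) as [M HM].
  set (e := / (Rabs M + 1)).
  assert (He : 0 < e) by (unfold e; apply Rinv_0_lt_compat; pose proof (Rabs_pos M); lra).
  assert (Hb : forall x, e * u x <= 1).
  { intros x. unfold e. specialize (HM x). rewrite Rabs_right in HM by (apply Rle_ge; auto).
    pose proof (RRle_abs M). apply (Rmult_le_reg_l (Rabs M + 1)). pose proof (Rabs_pos M); lra.
    rewrite <- Rmult_assoc, Rinv_r by (pose proof (Rabs_pos M); lra). specialize (Hu x). lra. }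
  assert (key : forall t, 0 < t -> 0 <= - 2 * e * E u h + t * E h h).
  { intros t Ht.
    assert (Heq : fT1 (fun x => e * u x + (- t) * h x) = (fun x => e * u x + 0 * h x)).
    { extensionality x. unfold fT1. specialize (Hb x). specialize (Hu x). specialize (Hh x).
      assert (0 <= e * u x) by (apply Rmult_le_pos; lra).
      destruct (Hd x) as [Z|Z]; rewrite Z.
      - assert (0 <= t * h x) by (apply Rmult_le_pos; lra). rdes; lra.
      - rdes; lra. }
    pose proof (E_T1 _ (D_lin e u (-t) h Du Dh)) as HT.
    rewrite Heq, !(E_quad) in HT; auto.
    assert (0 <= t * (- 2 * e * E u h + t * E h h)) by nra. nra. }
  pose proof (lim_pos _ _ key). nra.
Qed.

Lemma E_mono h phi psi : D h -> (forall x, 0 <= h x) -> Eset D h phi -> Eset D h psi ->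
  (forall x, psi x <= phi x) -> E h phi <= E h psi.
Proof.
  intros Dh Hh Ep Eq Hle. pose proof Ep as [Dp _]. pose proof Eq as [Dq _].
  assert (E (fun x => 1 * phi x + (-1) * psi x) h <= 0).
  { apply E_disj; auto. apply D_lin; auto.
    - intros x. specialize (Hle x). lra.
    - intros x. destruct (Rlt_dec 0 (h x)) as [p|p].
      + left. rewrite (Eset_one h phi x Ep p), (Eset_one h psi x Eq p). ring.
      + right. specialize (Hh x). lra. }
  rewrite (E_lin) in H; auto. rewrite (E_sym phi h), (E_sym psi h) in H; auto. lra.
Qed.

Definition cov (h : X -> R) := exists chi, D chi /\ (forall x, h x <> 0 -> chi x = 1) /\
  (forall x, chi x <= 1) /\ (forall x, 0 <= chi x).

Lemma cov_sub f h : cov f -> (forall x, h x <> 0 -> f x <> 0) -> cov h.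
Proof. intros [c [A [B [C G]]]] H. exists c. repeat split; auto. Qed.

Lemma cov_max f g h : cov f -> cov g -> (forall x, h x <> 0 -> f x <> 0 \/ g x <> 0) -> cov h.
Proof.
  intros [c [A [B [C G]]]] [c' [A' [B' [C' G']]]] H. exists (fmax c c'). repeat split.
  - apply D_max; auto.
  - intros x Hx. unfold fmax. specialize (C x); specialize (C' x).
    destruct (H x Hx) as [Z|Z]; [rewrite (B x Z)|rewrite (B' x Z)]; rdes; lra.
  - intros x; unfold fmax; specialize (C x); specialize (C' x); rdes; lra.
  - intros x; unfold fmax; specialize (G x); specialize (G' x); rdes; lra.
Qed.

Lemma D0plus_char f : D0plus D f <-> D f /\ (forall x, 0 <= f x) /\ cov f.
Proof.
  split.
  - intros [Df [Hp [phi He]]]. repeat split; auto. exists phi. pose proof He as [A [_ [B C]]].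
    repeat split; auto. intros x Hx. apply (Eset_one f); auto. specialize (Hp x). lra.
  - intros [Df [Hp [c [A [B [C G]]]]]]. repeat split; auto. exists c. repeat split; auto.
    intros x Hx. rewrite B; lra.
Qed.

Lemma D0_char h : D0 D h <-> D h /\ cov h.
Proof.
  split.
  - intros H. induction H.
    + split. apply D_zero. exists fzero. repeat split; auto using D_zero.
      intros x Hx. exfalso. apply Hx. reflexivity. intros; unfold fzero; lra. intros; unfold fzero; lra.
    + apply D0plus_char in H. tauto.
    + destruct IHspan1, IHspan2. split. apply D_add; auto.
      apply (cov_max f g); auto. intros x Hx. unfold fadd in Hx.
      destruct (Req_dec (f x) 0); destruct (Req_dec (g x) 0); auto. exfalso; apply Hx; lra.
    + destruct IHspan. split. apply D_scal; auto. apply (cov_sub f); auto.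
      intros x Hx Z. apply Hx. unfold fscal. rewrite Z; ring.
  - intros [Dh Hc].
    replace h with (fadd (fpos h) (fscal (-1) (fneg h))).
    + apply span_add; [|apply span_scal]; apply span_gen; apply D0plus_char; repeat split.
      * apply D_pos; auto.
      * intros x; unfold fpos; rdes; lra.
      * apply (cov_sub h); auto. intros x Hx Z. apply Hx. unfold fpos. rewrite Z. rdes; lra.
      * apply D_neg; auto.
      * intros x; unfold fneg; rdes; lra.
      * apply (cov_sub h); auto. intros x Hx Z. apply Hx. unfold fneg. rewrite Z. rdes; lra.
    + extensionality x. unfold fadd, fscal, fpos, fneg. rdes; lra.
Qed.

Lemma D0_D h : D0 D h -> D h. Proof. intros H; apply D0_char in H; tauto. Qed.
Lemma D0plus_D h : D0plus D h -> D h. Proof. intros [H _]; auto. Qed.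

Definition S f := fun r => exists phi, Eset D f phi /\ r = E f phi.

Lemma Kp_spec f : D0plus D f -> is_glb (S f) (killing_plus D E f).
Proof.
  intros Hf. pose proof Hf as [Df [Hp [phi He]]]. apply Rinf_spec.
  - exists (E f phi). exists phi; auto.
  - exists 0. intros r [psi [Hq ->]]. apply E_pos; auto.
Qed.

Lemma Kp_le f phi : D0plus D f -> Eset D f phi -> killing_plus D E f <= E f phi.
Proof. intros Hf He. apply (proj1 (Kp_spec f Hf)). exists phi; auto. Qed.

Lemma Kp_nn f : D0plus D f -> 0 <= killing_plus D E f.
Proof. intros Hf. apply (proj2 (Kp_spec f Hf)). intros r [psi [Hq ->]].
  destruct Hf as [Df [Hp _]]. apply E_pos; auto. Qed.

Lemma Kp_approx f e : D0plus D f -> 0 < e -> exists phi, Eset D f phi /\ E f phi <= killing_plus D E f + e.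
Proof. intros Hf He. destruct (glb_approx _ _ (Kp_spec f Hf) e He) as [r [[phi [Hp ->]] Hr]]. eauto. Qed.

Lemma D0plus_add f g : D0plus D f -> D0plus D g -> D0plus D (fadd f g).
Proof.
  intros Hf Hg. apply D0plus_char in Hf as [Df [Hf Cf]]. apply D0plus_char in Hg as [Dg [Hg Cg]].
  apply D0plus_char. repeat split. apply D_add; auto. intros x; unfold fadd; specialize (Hf x); specialize (Hg x); lra.
  apply (cov_max f g); auto. intros x Hx. unfold fadd in Hx.
  destruct (Req_dec (f x) 0); destruct (Req_dec (g x) 0); auto. exfalso; apply Hx; lra.
Qed.

Lemma Eset_anti f g phi : Eset D f phi -> (forall x, 0 < g x -> 0 < f x) -> Eset D g phi.
Proof. intros [A [B C]] H. split; auto. Qed.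

Lemma Kp_add f g : D0plus D f -> D0plus D g ->
  killing_plus D E (fadd f g) = killing_plus D E f + killing_plus D E g.
Proof.
  intros Hf Hg. apply Rinf_glb.
  pose proof Hf as [Df [Pf _]]. pose proof Hg as [Dg [Pg _]].
  split.
  - intros r [chi [Hc ->]]. pose proof Hc as [Dc _].
    rewrite E_add; auto. apply Rplus_le_compat; apply Kp_le; auto; apply (Eset_anti _ _ _ Hc);
    intros x Hx; unfold fadd; [specialize (Pg x)|specialize (Pf x)]; lra.
  - intros b Hb. apply le_eps. intros e He.
    destruct (Kp_approx f (e/2) Hf) as [phi [Hphi Ep]]; [lra|].
    destruct (Kp_approx g (e/2) Hg) as [psi [Hpsi Eq]]; [lra|].
    pose proof Hphi as [Dp [Ap [Bp Cp]]]. pose proof Hpsi as [Dq [Aq [Bq Cq]]].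
    assert (Ef : Eset D f (fmax phi psi)).
    { destruct Hphi as [_ [A1 [B1 C1]]]. destruct Hpsi as [_ [A2 [B2 C2]]]. repeat split. apply D_max; auto.
      all: intros x; unfold fmax; try intros Hx; try specialize (A1 x Hx);
        specialize (B1 x); specialize (B2 x); specialize (C1 x); specialize (C2 x); rdes; lra. }
    assert (Eg : Eset D g (fmax phi psi)).
    { destruct Hphi as [_ [A1 [B1 C1]]]. destruct Hpsi as [_ [A2 [B2 C2]]]. repeat split. apply D_max; auto.
      all: intros x; unfold fmax; try intros Hx; try specialize (A2 x Hx);
        specialize (B1 x); specialize (B2 x); specialize (C1 x); specialize (C2 x); rdes; lra. }
    assert (Efg : Eset D (fadd f g) (fmax phi psi)).
    { destruct Ef as [Dm [A1 [B1 C1]]]. destruct Eg as [_ [A2 _]]. repeat split; auto.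
      intros x Hx. unfold fadd in Hx. specialize (Pf x); specialize (Pg x).
      destruct (Rlt_dec 0 (f x)); [apply A1|apply A2]; auto; lra. }
    assert (b <= E (fadd f g) (fmax phi psi)) by (apply Hb; exists (fmax phi psi); auto).
    rewrite E_add in H; auto; [|apply D_max; auto].
    assert (E f (fmax phi psi) <= E f phi).
    { apply E_mono; auto. intros x; unfold fmax; rdes; lra. }
    assert (E g (fmax phi psi) <= E g psi).
    { apply E_mono; auto. intros x; unfold fmax; rdes; lra. }
    lra.
Qed.
Lemma D0plus_zero : D0plus D fzero.
Proof. apply D0plus_char. repeat split. apply D_zero. intros; unfold fzero; lra.
  exists fzero. repeat split; auto using D_zero. intros x Hx; exfalso; apply Hx; reflexivity.
  all: intros; unfold fzero; lra. Qed.

Lemma D0plus_scal c f : 0 < c -> D0plus D f -> D0plus D (fscal c f).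
Proof.
  intros Hc Hf. apply D0plus_char in Hf as [Df [Pf Cf]]. apply D0plus_char. repeat split.
  apply D_scal; auto. intros x; unfold fscal; specialize (Pf x); nra.
  apply (cov_sub f); auto. intros x Hx Z; apply Hx; unfold fscal; rewrite Z; ring.
Qed.

Lemma Kp_scal c f : 0 < c -> D0plus D f -> killing_plus D E (fscal c f) = c * killing_plus D E f.
Proof.
  intros Hc Hf. pose proof Hf as [Df [Pf _]]. pose proof (Kp_spec f Hf) as [A B].
  assert (Hs : forall phi, Eset D (fscal c f) phi <-> Eset D f phi).
  { intros phi. split; intros [P1 [P2 P3]]; split; auto; split; auto; intros x Hx; apply P2;
    unfold fscal in *; nra. }
  apply Rinf_glb. split.
  - intros r [phi [Hp ->]]. apply Hs in Hp. pose proof Hp as [Dp _]. rewrite E_scal; auto.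
    apply Rmult_le_compat_l; [lra|]. apply A. exists phi; auto.
  - intros b Hb. assert (b / c <= killing_plus D E f).
    { apply B. intros r [phi [Hp ->]]. pose proof Hp as [Dp _].
      assert (b <= E (fscal c f) phi) by (apply Hb; exists phi; split; auto; apply Hs; auto).
      rewrite E_scal in H; auto. apply (Rmult_le_reg_l c); auto. unfold Rdiv.
      rewrite (Rmult_comm b), <- Rmult_assoc, Rinv_r by lra. lra. }
    apply (Rmult_le_compat_l c) in H; [|lra]. unfold Rdiv in H.
    rewrite (Rmult_comm b), <- Rmult_assoc, Rinv_r in H by lra. lra.
Qed.

Lemma Kp_zero : killing_plus D E fzero = 0.
Proof.
  pose proof (Kp_scal 2 fzero ltac:(lra) D0plus_zero).
  replace (fscal 2 fzero) with (@fzero X) in H by (extensionality x; unfold fscal, fzero; ring). lra.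
Qed.

Lemma cov_D0plus f : D0plus D f -> cov f.
Proof. intros H; apply D0plus_char in H; tauto. Qed.

Lemma Kdiff a b : D0plus D a -> D0plus D b ->
  killing D E (fun x => a x - b x) = killing_plus D E a - killing_plus D E b.
Proof.
  intros Ha Hb. pose proof Ha as [Da [Pa _]]. pose proof Hb as [Db [Pb _]].
  set (h := fun x => a x - b x).
  assert (Dh : D h) by (apply D_sub; auto).
  assert (Ch : forall x, (fpos h x <> 0 \/ fneg h x <> 0) -> a x <> 0 \/ b x <> 0).
  { intros x Hx. destruct (Req_dec (a x) 0); destruct (Req_dec (b x) 0); auto.
    exfalso. unfold fpos, fneg, h in Hx. rewrite H, H0 in Hx. rdes; lra. }
  assert (P1 : D0plus D (fpos h)).
  { apply D0plus_char. repeat split. apply D_pos; auto. intros; unfold fpos; rdes; lra.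
    apply (cov_max a b); auto using cov_D0plus. }
  assert (P2 : D0plus D (fneg h)).
  { apply D0plus_char. repeat split. apply D_neg; auto. intros; unfold fneg; rdes; lra.
    apply (cov_max a b); auto using cov_D0plus. }
  assert (Heq : fadd (fpos h) b = fadd (fneg h) a).
  { extensionality x. unfold fadd, fpos, fneg, h. rdes; lra. }
  pose proof (Kp_add _ _ P1 Hb). pose proof (Kp_add _ _ P2 Ha). rewrite Heq in H.
  unfold killing. fold h. lra.
Qed.

Lemma K_D0plus a : D0plus D a -> killing D E a = killing_plus D E a.
Proof.
  intros Ha. pose proof (Kdiff a fzero Ha D0plus_zero). rewrite Kp_zero in H.
  replace (fun x => a x - fzero x) with a in H by (extensionality x; unfold fzero; ring). lra.
Qed.

Lemma pos_D0plus h : D0 D h -> D0plus D (fpos h).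
Proof.
  intros H. apply D0_char in H as [Dh Ch]. apply D0plus_char. repeat split.
  apply D_pos; auto. intros; unfold fpos; rdes; lra.
  apply (cov_sub h); auto. intros x Hx Z; apply Hx; unfold fpos; rewrite Z; rdes; lra.
Qed.
Lemma neg_D0plus h : D0 D h -> D0plus D (fneg h).
Proof.
  intros H. apply D0_char in H as [Dh Ch]. apply D0plus_char. repeat split.
  apply D_neg; auto. intros; unfold fneg; rdes; lra.
  apply (cov_sub h); auto. intros x Hx Z; apply Hx; unfold fneg; rewrite Z; rdes; lra.
Qed.

Lemma K_add h1 h2 : D0 D h1 -> D0 D h2 -> killing D E (fadd h1 h2) = killing D E h1 + killing D E h2.
Proof.
  intros H1 H2.
  pose proof (pos_D0plus h1 H1). pose proof (pos_D0plus h2 H2).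
  pose proof (neg_D0plus h1 H1). pose proof (neg_D0plus h2 H2).
  replace (fadd h1 h2) with (fun x => fadd (fpos h1) (fpos h2) x - fadd (fneg h1) (fneg h2) x).
  rewrite Kdiff by (apply D0plus_add; auto). rewrite !Kp_add by auto. unfold killing. ring.
  extensionality x. unfold fadd, fpos, fneg. rdes; lra.
Qed.

Lemma K_scal c h : D0 D h -> killing D E (fscal c h) = c * killing D E h.
Proof.
  intros H. pose proof (pos_D0plus h H). pose proof (neg_D0plus h H).
  destruct (Rtotal_order c 0) as [Hc|[Hc|Hc]].
  - replace (fscal c h) with (fun x => fscal (-c) (fneg h) x - fscal (-c) (fpos h) x).
    rewrite Kdiff by (apply D0plus_scal; auto; lra). rewrite !Kp_scal by (auto; lra). unfold killing. ring.
    extensionality x. unfold fscal, fpos, fneg. rdes; nra.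
  - subst. replace (fscal 0 h) with (fun x => @fzero X x - @fzero X x).
    rewrite Kdiff by apply D0plus_zero. ring.
    extensionality x. unfold fscal, fzero. ring.
  - replace (fscal c h) with (fun x => fscal c (fpos h) x - fscal c (fneg h) x).
    rewrite Kdiff by (apply D0plus_scal; auto; lra). rewrite !Kp_scal by (auto; lra). unfold killing. ring.
    extensionality x. unfold fscal, fpos, fneg. rdes; nra.
Qed.

Lemma D0_add f g : D0 D f -> D0 D g -> D0 D (fadd f g). Proof. apply span_add. Qed.
Lemma D0_scal a f : D0 D f -> D0 D (fscal a f). Proof. apply span_scal. Qed.

Lemma K_lin a f b g : D0 D f -> D0 D g ->
  killing D E (fun x => a * f x + b * g x) = a * killing D E f + b * killing D E g.
Proof.
  intros Hf Hg. change (fun x => a * f x + b * g x) with (fadd (fscal a f) (fscal b g)).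
  rewrite K_add, !K_scal; auto using D0_scal.
Qed.
Lemma sq_ind d chi : 0 < d -> D chi -> (forall x, chi x <= 1) -> (forall x, 0 <= chi x) ->
  forall n u, D u -> (forall x, 0 <= u x) -> (forall x, u x <= INR n * d) ->
  (forall x, u x <> 0 -> chi x = 1) ->
  E (fmul u u) chi <= E u u + d * E u chi.
Proof.
  intros Hd Dc C1 C0 n. induction n as [|n IH]; intros u Du P0 Pn Pc.
  - replace u with (@fzero X).
    + replace (fmul fzero fzero) with (@fzero X) by (extensionality x; unfold fmul, fzero; ring).
      rewrite !E_zero; auto using D_zero. lra.
    + extensionality x. specialize (P0 x); specialize (Pn x). simpl in Pn. unfold fzero. lra.
  - set (g := fun x => Rmin (u x) d).
    set (h := fun x => u x - g x).
    assert (Dg : D g) by (apply D_minc; auto).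
    assert (Dh : D h) by (apply D_sub; auto).
    assert (g0 : forall x, 0 <= g x) by (intros x; unfold g; specialize (P0 x); rdes; lra).
    assert (gd : forall x, g x <= d) by (intros x; unfold g; rdes; lra).
    assert (h0 : forall x, 0 <= h x) by (intros x; unfold h, g; rdes; lra).
    assert (hpos : forall x, 0 < h x -> g x = d) by (intros x; unfold h, g; rdes; lra).
    assert (gz : forall x, g x <> 0 -> u x <> 0) by (intros x Hx Z; apply Hx; unfold g; rewrite Z; rdes; lra).
    assert (hz : forall x, h x <> 0 -> u x <> 0) by (intros x Hx Z; apply Hx; unfold h, g; rewrite Z; rdes; lra).
    assert (IHh : E (fmul h h) chi <= E h h + d * E h chi).
    { apply IH; auto. intros x. specialize (Pn x). rewrite S_INR in Pn. pose proof (pos_INR n). unfold h, g. rdes; nra. }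
    assert (Hgg : E (fmul g g) chi <= d * E g chi).
    { assert (0 <= E (fun x => d * g x + (-1) * fmul g g x) chi).
      { apply E_pos. apply D_lin; auto. apply D_mul; auto.
        intros x. unfold fmul. specialize (g0 x); specialize (gd x). nra.
        repeat split; auto. intros x Hx. rewrite Pc. lra. apply gz. intros Z. rewrite Z in Hx.
        unfold fmul in Hx; nra. }
      rewrite E_lin in H; auto. lra. apply D_mul; auto. }
    set (phi := fscal (/ d) g).
    assert (Dphi : D phi) by (apply D_scal; auto).
    assert (Hgphi : g = fscal d phi) by (extensionality x; unfold phi, fscal; field; lra).
    assert (Ehchi : Eset D h chi).
    { repeat split; auto. intros x Hx. rewrite Pc. lra. apply hz. lra. }
    assert (Ehphi : Eset D h phi).
    { repeat split; auto; intros x; unfold phi, fscal.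
      - intros Hx. rewrite hpos by auto. rewrite Rinv_l; lra.
      - specialize (gd x). apply (Rmult_le_reg_l d); auto. rewrite <- Rmult_assoc, Rinv_r; lra.
      - specialize (g0 x). apply Rmult_le_pos; auto. left; apply Rinv_0_lt_compat; auto. }
    assert (Hcross : d * E h chi <= E g h).
    { rewrite (E_sym g h); auto. rewrite Hgphi. rewrite E_scal_r; auto.
      apply Rmult_le_compat_l; [lra|]. apply E_mono; auto.
      intros x. destruct (Req_dec (u x) 0) as [Z|Z].
      - unfold phi, fscal, g. rewrite Z. specialize (C0 x). rdes; nra.
      - rewrite Pc by auto. destruct Ehphi as [_ [_ [B _]]]. apply B. }
    assert (Hu : u = fadd g h) by (extensionality x; unfold fadd, h; ring).
    assert (Huu : fmul u u = fadd (fmul g g) (fadd (fscal (2 * d) h) (fmul h h))).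
    { extensionality x. unfold fmul, fadd, fscal, h, g. rdes; nra. }
    rewrite Huu. rewrite Hu at 1 2 3.
    assert (Dgg : D (fmul g g)) by (apply D_mul; auto).
    assert (Dhh : D (fmul h h)) by (apply D_mul; auto).
    rewrite !E_add, !E_add_r, E_scal; auto; try apply D_add; auto; try apply D_scal; auto.
    rewrite (E_sym h g); auto.
    pose proof (E_nn g Dg). lra.
Qed.

Lemma sq_pos u chi : D u -> (forall x, 0 <= u x) -> D chi -> (forall x, chi x <= 1) -> (forall x, 0 <= chi x) ->
  (forall x, u x <> 0 -> chi x = 1) -> E (fmul u u) chi <= E u u.
Proof.
  intros Du P0 Dc C1 C0 Pc.
  assert (Hp : 0 <= E u chi).
  { apply E_pos; auto. repeat split; auto. intros x Hx. rewrite Pc; lra. }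
  destruct (D_bnd u Du) as [M HM].
  apply le_eps. intros e He.
  set (d := e / (E u chi + 1)).
  assert (Hd : 0 < d) by (unfold d; apply Rdiv_lt_0_compat; lra).
  destruct (INR_archimed d M Hd) as [n Hn].
  assert (E (fmul u u) chi <= E u u + d * E u chi).
  { apply (sq_ind d chi Hd Dc C1 C0 n); auto. intros x. specialize (HM x).
    pose proof (RRle_abs (u x)). lra. }
  assert (d * E u chi <= e).
  { unfold d. unfold Rdiv. rewrite Rmult_assoc. 
    assert (/ (E u chi + 1) * E u chi <= 1).
    { apply (Rmult_le_reg_l (E u chi + 1)); [lra|]. rewrite <- Rmult_assoc, Rinv_r by lra. lra. }
    nra. }
  lra.
Qed.

Lemma sq f chi : D f -> D chi -> (forall x, chi x <= 1) -> (forall x, 0 <= chi x) ->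
  (forall x, f x <> 0 -> chi x = 1) -> E (fmul f f) chi <= E f f.
Proof.
  intros Df Dc C1 C0 Pc.
  set (p := fpos f). set (n := fneg f).
  assert (Dp : D p) by (apply D_pos; auto). assert (Dn : D n) by (apply D_neg; auto).
  assert (Hf : f = fun x => 1 * p x + (-1) * n x) by (extensionality x; unfold p, n, fpos, fneg; rdes; lra).
  assert (Hff : fmul f f = fadd (fmul p p) (fmul n n))
    by (extensionality x; unfold fmul, fadd, p, n, fpos, fneg; rdes; nra).
  assert (Hpn : E p n <= 0).
  { apply E_disj; auto. intros; unfold p, fpos; rdes; lra. intros; unfold n, fneg; rdes; lra.
    intros x; unfold p, n, fpos, fneg; rdes; lra. }
  assert (A1 : E (fmul p p) chi <= E p p).
  { apply sq_pos; auto. intros; unfold p, fpos; rdes; lra.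
    intros x Hx; apply Pc. intros Z; apply Hx; unfold p, fpos; rewrite Z; rdes; lra. }
  assert (A2 : E (fmul n n) chi <= E n n).
  { apply sq_pos; auto. intros; unfold n, fneg; rdes; lra.
    intros x Hx; apply Pc. intros Z; apply Hx; unfold n, fneg; rewrite Z; rdes; lra. }
  rewrite Hff, E_add; auto; try apply D_mul; auto.
  rewrite Hf. rewrite E_quad; auto. lra.
Qed.
Lemma D0_mul f h : D0 D f -> D h -> D0 D (fmul f h).
Proof.
  intros Hf Dh. apply D0_char in Hf as [Df Cf]. apply D0_char. split. apply D_mul; auto.
  apply (cov_sub f); auto. intros x Hx Z; apply Hx; unfold fmul; rewrite Z; ring.
Qed.

Lemma claim1 f : D0 D f -> killing D E (fmul f f) <= E f f.
Proof.
  intros Hf. pose proof Hf as Hf'. apply D0_char in Hf' as [Df [chi [Dc [C1 [C2 C3]]]]].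
  assert (P : D0plus D (fmul f f)).
  { apply D0plus_char. repeat split. apply D_mul; auto. intros x; unfold fmul; nra.
    apply (cov_sub f). exists chi; auto. intros x Hx Z; apply Hx; unfold fmul; rewrite Z; ring. }
  rewrite K_D0plus by auto.
  apply Rle_trans with (E (fmul f f) chi).
  - apply Kp_le; auto. repeat split; auto. intros x Hx. rewrite C1. lra.
    intros Z. unfold fmul in Hx. rewrite Z in Hx. lra.
  - apply sq; auto.
Qed.

Lemma mul_Eset g psi : (forall x, 0 <= g x) -> Eset D g psi -> fmul g psi = g.
Proof.
  intros Hg He. extensionality x. unfold fmul. destruct (Rlt_dec 0 (g x)).
  rewrite (Eset_one g psi x He r). ring. specialize (Hg x). assert (g x = 0) by lra. rewrite H; ring.
Qed.

Definition Qf := fun f g => E f g - killing D E (fmul f g).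

Lemma claim2 : bilinear_form (D0 D) Qf.
Proof.
  split; [|split; [|split]].
  - split; [apply span_zero|split]. apply span_add. apply span_scal.
  - intros f g Hf Hg. unfold Qf. rewrite E_sym by (apply D0_D; auto).
    replace (fmul f g) with (fmul g f) by (extensionality x; unfold fmul; ring). auto.
  - intros a b f g h Hf Hg Hh. unfold Qf.
    pose proof (D0_D f Hf). pose proof (D0_D g Hg). pose proof (D0_D h Hh).
    change (fadd (fscal a f) (fscal b g)) with (fun x => a * f x + b * g x).
    rewrite E_lin by auto.
    replace (fmul (fun x => a * f x + b * g x) h) with (fun x => a * fmul f h x + b * fmul g h x)
      by (extensionality x; unfold fmul; ring).
    rewrite K_lin by (apply D0_mul; auto). ring.
  - intros f Hf. unfold Qf. pose proof (claim1 f Hf). lra.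
Qed.

Lemma claim3 : unit_contraction_operates (D0 D) Qf.
Proof.
  intros f Hf. pose proof Hf as Hf'. apply D0_char in Hf' as [Df Cf].
  set (u := fT1 f). set (v := fun x => Rmax (f x - 1) 0). set (w := fneg f).
  assert (Du : D u) by (apply D_T1; auto).
  assert (Dv : D v).
  { apply (D_ext (fun x => fpos f x - u x)). apply D_sub; auto. apply D_pos; auto.
    extensionality x. unfold fpos, u, v, fT1. rdes; lra. }
  assert (Dw : D w) by (apply D_neg; auto).
  assert (Cv : forall h, D h -> (forall x, h x <> 0 -> f x <> 0) -> D0 D h).
  { intros h Dh Hh. apply D0_char. split; auto. apply (cov_sub f); auto. }
  assert (D0u : D0 D u) by (apply Cv; auto; intros x Hx Z; apply Hx; unfold u, fT1; rewrite Z; rdes; lra).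
  split; auto. unfold Qf.
  assert (D0v : D0 D v) by (apply Cv; auto; intros x Hx Z; apply Hx; unfold v; rewrite Z; rdes; lra).
  assert (D0w : D0 D w) by (apply Cv; auto; intros x Hx Z; apply Hx; unfold w, fneg; rewrite Z; rdes; lra).
  set (s := fun x => 1 * u x + 1 * v x).
  assert (Ds : D s) by (apply D_lin; auto).
  assert (Hf1 : f = fun x => 1 * s x + (-1) * w x).
  { extensionality x. unfold s, u, v, w, fT1, fneg. rdes; lra. }
  assert (Hff : fmul f f = fadd (fadd (fmul u u) (fmul v v)) (fadd (fmul w w) (fscal 2 v))).
  { extensionality x. unfold fmul, fadd, fscal, u, v, w, fT1, fneg. rdes; nra. }
  rewrite Hff. rewrite !K_add, K_scal; auto; try apply D0_add; try apply D0_scal; try apply D0_mul; auto.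
  rewrite Hf1 at 1 2. rewrite E_quad by auto. unfold s. rewrite E_quad by auto.
  rewrite E_lin by auto.
  pose proof (claim1 v D0v). pose proof (claim1 w D0w).
  assert (Hv : killing D E v <= E u v).
  { assert (P : D0plus D v).
    { apply D0plus_char. repeat split; auto. intros; unfold v; rdes; lra.
      apply D0_char in D0v; tauto. }
    rewrite K_D0plus by auto. rewrite (E_sym u v) by auto. apply Kp_le; auto.
    repeat split; auto; intros x; unfold u, v, fT1; try intros Hx; rdes; lra. }
  assert (Huw : E u w <= 0).
  { apply E_disj; auto; intros x; unfold u, w, fT1, fneg; rdes; lra. }
  assert (Hvw : E v w <= 0).
  { apply E_disj; auto; intros x; unfold v, w, fneg; rdes; lra. }
  lra.
Qed.
Lemma Kq_zero g : D0plus D g -> killing_plus (D0 D) Qf g = 0.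
Proof.
  intros Hg. pose proof Hg as [Dg [Pg _]].
  set (K0 := killing_plus D E g).
  assert (HK0 : 0 <= K0) by (apply Kp_nn; auto).
  apply Rinf_glb. split.
  - intros r [psi [Hpsi ->]]. destruct Hpsi as [D0p [A [B C]]].
    assert (Ep : Eset D g psi) by (repeat split; auto; apply D0_D; auto).
    unfold Qf. rewrite mul_Eset by auto. rewrite K_D0plus by auto.
    pose proof (Kp_le g psi Hg Ep). lra.
  - intros b Hb. apply le_eps. intros e He. rewrite Rplus_0_l.
    set (eps := e / (e + 4 * (K0 + 1))).
    assert (He1 : 0 < eps) by (unfold eps; apply Rdiv_lt_0_compat; lra).
    assert (He2 : eps < 1).
    { unfold eps. apply (Rmult_lt_reg_l (e + 4 * (K0 + 1))); [lra|].
      unfold Rdiv. rewrite (Rmult_comm e), <- Rmult_assoc, Rinv_r by lra. lra. }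
    destruct (Kp_approx g eps Hg He1) as [phi [Ephi Hphi]].
    pose proof Ephi as [Dphi [A1 [B1 C1]]].
    set (m := fun x => Rmin (phi x) eps).
    assert (Dm : D m) by (apply D_minc; auto).
    set (m' := fscal (/ eps) m).
    assert (Hie : 0 < / eps) by (apply Rinv_0_lt_compat; auto).
    assert (Em' : Eset D g m').
    { repeat split. apply D_scal; auto.
      - intros x Hx. unfold m', m, fscal. rewrite (Eset_one g phi x Ephi Hx).
        rdes; [lra|]. rewrite Rinv_l; lra.
      - intros x. unfold m', m, fscal. specialize (C1 x).
        apply (Rmult_le_reg_l eps); auto. rewrite <- Rmult_assoc, Rinv_r by lra. rdes; lra.
      - intros x. unfold m', m, fscal. specialize (C1 x). apply Rmult_le_pos; [lra|]. rdes; lra. }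
    assert (Hmm : m = fscal eps m') by (extensionality x; unfold m', fscal; field; lra).
    set (a := / (1 - eps)).
    assert (Ha : 0 < a) by (unfold a; apply Rinv_0_lt_compat; lra).
    set (psi := fscal a (fun x => 1 * phi x + (-1) * m x)).
    assert (Dpsi : D psi) by (apply D_scal, D_lin; auto).
    assert (D0psi : D0 D psi).
    { apply D0_char. split; auto. exists (fmin (fscal (/ eps) phi) fone). repeat split.
      - apply D_min1, D_scal; auto.
      - intros x Hx. unfold fmin, fscal, fone.
        assert (phi x > eps).
        { destruct (Rle_lt_dec (phi x) eps); auto. exfalso. apply Hx. unfold psi, fscal, m.
          rdes; lra. }
        assert (1 < / eps * phi x).
        { apply (Rmult_lt_reg_l eps); auto. rewrite <- Rmult_assoc, Rinv_r by lra. lra. }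
        rdes; lra.
      - intros x; unfold fmin, fone; rdes; lra.
      - intros x; unfold fmin, fscal, fone. specialize (C1 x).
        assert (0 <= / eps * phi x) by (apply Rmult_le_pos; lra). rdes; lra. }
    assert (Epsi : Eset (D0 D) g psi).
    { repeat split; auto.
      - intros x Hx. unfold psi, m, fscal. rewrite (Eset_one g phi x Ephi Hx).
        unfold a. rdes; [lra|]. right. field. lra.
      - intros x. unfold psi, m, fscal. specialize (B1 x). specialize (C1 x).
        assert (1 * phi x + -1 * Rmin (phi x) eps <= 1 - eps) by (rdes; lra).
        apply (Rmult_le_reg_l (1 - eps)); [lra|]. rewrite <- Rmult_assoc. unfold a.
        rewrite Rinv_r by lra. lra.
      - intros x. unfold psi, m, fscal. specialize (C1 x). apply Rmult_le_pos; [lra|]. rdes; lra. }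
    assert (Hb1 : b <= Qf g psi) by (apply Hb; exists psi; auto).
    unfold Qf in Hb1. assert (Epsi' : Eset D g psi).
    { destruct Epsi as [Y1 Y2]. split; auto. }
    rewrite mul_Eset in Hb1 by auto.
    rewrite K_D0plus in Hb1 by auto. fold K0 in Hb1.
    unfold psi in Hb1. rewrite E_scal_r, E_lin_r in Hb1 by (auto; apply D_lin; auto).
    rewrite Hmm in Hb1. rewrite E_scal_r in Hb1 by (auto; apply D_scal; auto).
    pose proof (Kp_le g m' Hg Em'). fold K0 in H.
    assert (Hfin : a * (K0 + eps) - K0 = e / 4).
    { unfold a, eps. field. split; lra. }
    assert (b <= a * (K0 + eps) - K0).
    { fold K0 in Hphi. assert (0 <= eps * E g m') by (apply Rmult_le_pos; lra).
      assert (E g phi - eps * E g m' <= K0 + eps) by lra.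
      assert (a * (1 * E g phi + -1 * (eps * E g m')) <= a * (K0 + eps)) by (apply Rmult_le_compat_l; lra).
      lra. }
    lra.
Qed.

Lemma claim4 : zero_killing (D0 D) Qf.
Proof.
  intros f Hf.
  assert (H0 : D0 D f).
  { induction Hf. apply span_zero. destruct H; auto. apply span_add; auto. apply span_scal; auto. }
  unfold killing. rewrite (Kq_zero (fpos f)) by (apply pos_D0plus; auto).
  rewrite (Kq_zero (fneg f)) by (apply neg_D0plus; auto). ring.
Qed.
End Main.

Theorem propositionP (X : Type) (D : (X -> R) -> Prop) (E : (X -> R) -> (X -> R) -> R)
  (hD : stone_algebra_lattice D) (hE : bilinear_form D E)
  (hT : unit_contraction_operates D E) :
  let K := killing D E in
  let Q := fun f g => E f g - K (fmul f g) in
  (forall f, D0 D f -> K (fmul f f) <= E f f) /\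
  bilinear_form (D0 D) Q /\
  unit_contraction_operates (D0 D) Q /\
  zero_killing (D0 D) Q.
Proof.
  intros K Q.
  split; [|split; [|split]].
  - exact (claim1 D E hD hE hT).
  - exact (claim2 D E hD hE hT).
  - exact (claim3 D E hD hE hT).
  - exact (claim4 D E hD hE hT).
Qed.
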